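(* Let $A=(Q,q_0,\Sigma,\delta,\alpha)$ with $Q_d\subseteq Q$ be an LDBA, let $\mathsf{Ord}$ be an ordering of the states of $A$ w.r.t. $Q_d$, and let $w\in\Sigma^\omega$. For every $i\ge 0$ and any two distinct vertices $v,v'\in V^d_i$ of the run DAG $G_w$, either $v\sqsubset_i v'$ or $v'\sqsubset_i v$. That is, $\sqsubset_i$ is a strict total order on $V^d_i$.
   Context: A (transition-based) nondeterministic Büchi automaton is $A=(Q,q_0,\Sigma,\delta,\alpha)$ with finite state set $Q$, initial state $q_0\in Q$, finite alphabet $\Sigma$, total transition relation $\delta\subseteq Q\times\Sigma\times Q$ (for all $q,\sigma$ there is some $q'$ with $(q,\sigma,q')\in\delta$), and accepting transitions $\alpha\subseteq\delta$. A run on an $\omega$-word $w$ is $\rho:\mathbb N\to Q$ with $\rho(0)=q_0$ and $(\rho(i),w(i),\rho(i+1))\in\delta$ for all $i$. It is accepting if $(\rho(i),w(i),\rho(i+1))\in\alpha$ for infinitely many $i$. $\mathsf L(A)$ is the set of words having an accepting run. An LDBA is such an automaton together with $Q_d\subseteq Q$ such that: (1) $\alpha\subseteq Q_d\times\Sigma\times Q_d$; (2) for every $q\in Q_d$ and $\sigma\in\Sigma$ there is exactly one $q'$ with $(q,\sigma,q')\in\delta$, written $\delta(q,\sigma)$; (3) if $q\in Q_d$ and $(q,\sigma,q')\in\delta$ then $q'\in Q_d$. It is assumed that $q_0\notin Q_d$, and $\overline{Q_d}=Q\setminus Q_d$. The run DAG of $A$ on $w$ is $G_w=(V,E)$ with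 $V=\bigcup_i V_i$, where $V_0=\{(q_0,0)\}$, $V_i=\{(q,i)\mid \exists (q',i-1)\in V_{i-1}:(q',w(i-1),q)\in\delta\}$ for $i\ge1$, and $E=\{((q,i),(q',i+1))\in V_i\times V_{i+1}\mid (q,w(i),q')\in\delta\}$. Let $V^d_i=V_i\cap(Q_d\times\{i\})$. Runs are paths of $G_w$ starting at $(q_0,0)$; a run prefix of length $n+1$ is such a path $v_0\dots v_n$ with $v_j\in V_j$. An ordering of the states of $A$ w.r.t. $Q_d$ is a function $\mathsf{Ord}:Q\to\{1,\dots,|Q_d|,+\infty\}$ with $\mathsf{Ord}(q)=+\infty$ for $q\in\overline{Q_d}$, $\mathsf{Ord}(q)\neq+\infty$ for $q\in Q_d$, and $\mathsf{Ord}$ injective on $Q_d$; set $\mathsf{Ord}((q,i))=\mathsf{Ord}(q)$ (with $+\infty$ greater than all integers). For run prefixes $\rho(0..n),\rho'(0..n)$ of length $n+1$, $\rho(0..n)\sqsubseteq\rho'(0..n)$ iff either $\mathsf{Ord}(\rho(i))=\mathsf{Ord}(\rho'(i))$ for all $0\le i\le n$, or there is $i\le n$ with $\mathsf{Ord}(\rho(i))<\mathsf{Ord}(\rho'(i))$ and $\mathsf{Ord}(\rho(j))=\mathsf{Ord}(\rho'(j))$ for all $j<i$. For distinct $v,v'\in V_i$, $v\sqsubset_i v'$ iff there is a run prefix ending in $v$ that is $\sqsubseteq$-smaller than all run prefixes ending in $v'$. *)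

(* Defs.v *)
From mathcomp Require Import all_boot.
Set Implicit Arguments. Unset Strict Implicit. Unset Printing Implicit Defensive.

Definition total_rel (Q Sigma : finType) (delta : Q -> Sigma -> Q -> bool) : Prop :=
  forall q s, exists q', delta q s q'.

Definition is_LDBA (Q Sigma : finType) (q0 : Q) (delta alpha : Q -> Sigma -> Q -> bool)
  (Qd : {set Q}) : Prop :=
  [/\ total_rel delta,
      (forall q s q', alpha q s q' -> delta q s q') /\ q0 \notin Qd,
      (forall q s q', alpha q s q' -> (q \in Qd) && (q' \in Qd)),
      (forall q s, q \in Qd -> exists q', delta q s q' /\ forall q'', delta q s q'' -> q'' = q')
    & (forall q s q', q \in Qd -> delta q s q' -> q' \in Qd)].

(* Values of Ord: Some k = the integer k, None = +infinity. *)
Definition ordlt (a b : option nat) : bool :=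
  match a, b with
  | Some x, Some y => x < y
  | Some _, None => true
  | None, _ => false
  end.

Definition is_ordering (Q : finType) (Qd : {set Q}) (Ord : Q -> option nat) : Prop :=
  [/\ (forall q, q \notin Qd -> Ord q = None),
      (forall q, q \in Qd -> exists k, Ord q = Some k /\ 1 <= k <= #|Qd|)
    & (forall q q', q \in Qd -> q' \in Qd -> Ord q = Ord q' -> q = q')].

(* Level sets of the run DAG: (q, i) \in V_i iff inV i q. *)
Fixpoint inV (Q Sigma : finType) (q0 : Q) (delta : Q -> Sigma -> Q -> bool)
  (w : nat -> Sigma) (i : nat) (q : Q) : bool :=
  match i with
  | 0 => q == q0
  | i'.+1 => [exists q', inV q0 delta w i' q' && delta q' (w i') q]
  end.

(* A run prefix of length n+1, represented by its sequence of states
   (the vertex at position j is (nth q0 p j, j)). *)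
Definition run_prefix (Q Sigma : finType) (q0 : Q) (delta : Q -> Sigma -> Q -> bool)
  (w : nat -> Sigma) (n : nat) (p : seq Q) : Prop :=
  [/\ size p = n.+1, nth q0 p 0 = q0 &
      forall j, j < n -> delta (nth q0 p j) (w j) (nth q0 p j.+1)].

Definition prefix_le (Q : finType) (q0 : Q) (Ord : Q -> option nat) (n : nat)
  (p p' : seq Q) : Prop :=
  (forall i, i <= n -> Ord (nth q0 p i) = Ord (nth q0 p' i)) \/
  (exists i, [/\ i <= n, ordlt (Ord (nth q0 p i)) (Ord (nth q0 p' i)) &
                forall j, j < i -> Ord (nth q0 p j) = Ord (nth q0 p' j)]).

Definition dag_lt (Q Sigma : finType) (q0 : Q) (delta : Q -> Sigma -> Q -> bool)
  (Ord : Q -> option nat) (w : nat -> Sigma) (i : nat) (v v' : Q) : Prop :=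
  exists p, [/\ run_prefix q0 delta w i p, nth q0 p i = v &
    forall p', run_prefix q0 delta w i p' -> nth q0 p' i = v' -> prefix_le q0 Ord i p p'].

Definition inVd (Q Sigma : finType) (q0 : Q) (delta : Q -> Sigma -> Q -> bool)
  (Qd : {set Q}) (w : nat -> Sigma) (i : nat) (q : Q) : bool :=
  (q \in Qd) && inV q0 delta w i q.

(* Main.v *)
Require Import Defs.
From Stdlib Require Import Classical.
From mathcomp Require Import all_boot.

Section Aux.

Definition lexle (n : nat) (a b : nat -> option nat) : Prop :=
  (forall i, i <= n -> a i = b i) \/
  (exists i, [/\ i <= n, ordlt (a i) (b i) & forall j, j < i -> a j = b j]).

Lemma ordlt_irr x : ~~ ordlt x x.
Proof. by case: x => [x|] //=; rewrite ltnn. Qed.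

Lemma ordlt_trans x y z : ordlt x y -> ordlt y z -> ordlt x z.
Proof.
case: x => [x|]; case: y => [y|]; case: z => [z|] //=; exact: ltn_trans.
Qed.

Lemma ordlt_tri x y : x = y \/ ordlt x y \/ ordlt y x.
Proof.
case: x => [x|]; case: y => [y|] /=; auto.
case: (ltngtP x y) => H; auto.
Qed.

Lemma lexle_total n a b : lexle n a b \/ lexle n b a.
Proof.
case: (classic (exists i, (i <= n) && (a i != b i))) => [H|H]; last first.
  left; left => i Hi; apply/eqP; apply/negPn/negP => Hne; apply: H.
  by exists i; rewrite Hi Hne.
case: (ex_minnP H) => m /andP [Hm Hne] Hmin.
have Heq : forall j, j < m -> a j = b j.
  move=> j Hj; apply/eqP; apply/negPn/negP => Hne'.
  have := Hmin j; rewrite (leq_trans (ltnW Hj) Hm) Hne' => /(_ isT).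
  by rewrite leqNgt Hj.
case: (ordlt_tri (a m) (b m)) => [E|[L|L]].
- by rewrite E eqxx in Hne.
- by left; right; exists m.
- right; right; exists m; split => // j Hj; by rewrite Heq.
Qed.

Lemma lexle_trans n a b c : lexle n a b -> lexle n b c -> lexle n a c.
Proof.
move=> [E1|[i [Hi L1 E1]]] [E2|[j [Hj L2 E2]]].
- by left => k Hk; rewrite E1 // E2.
- right; exists j; split => //; first by rewrite E1.
  by move=> k Hk; rewrite E1 ?E2 // (leq_trans (ltnW Hk) Hj).
- right; exists i; split => //; first by rewrite -E2.
  by move=> k Hk; rewrite E1 ?E2 // (leq_trans (ltnW Hk) Hi).
- case: (ltngtP i j) => H.
  + right; exists i; split => //; first by rewrite -E2.
    by move=> k Hk; rewrite E1 // E2 // (ltn_trans Hk H).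
  + right; exists j; split => //; first by rewrite E1.
    by move=> k Hk; rewrite E1 ?E2 // (ltn_trans Hk H).
  + subst j; right; exists i; split => //; first exact: ordlt_trans L1 L2.
    by move=> k Hk; rewrite E1 // E2.
Qed.

Lemma lexle_antisym n a b : lexle n a b -> lexle n b a -> forall i, i <= n -> a i = b i.
Proof.
move=> [E1|[i [Hi L1 E1]]] [E2|[j [Hj L2 E2]]].
- exact: E1.
- exfalso; move: L2; rewrite E1 //; by rewrite (negbTE (ordlt_irr _)).
- exfalso; move: L1; rewrite E2 //; by rewrite (negbTE (ordlt_irr _)).
- exfalso; case: (ltngtP i j) => H.
  + by move: L1; rewrite E2 // (negbTE (ordlt_irr _)).
  + by move: L2; rewrite E1 // (negbTE (ordlt_irr _)).
  + subst j; by move: (@ordlt_trans _ _ _ L1 L2); rewrite (negbTE (ordlt_irr _)).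
Qed.

Lemma list_min (T : eqType) (P : T -> Prop) (R : T -> T -> Prop) :
  (forall x y, R x y \/ R y x) -> (forall x y z, R x y -> R y z -> R x z) ->
  forall l : seq T, (exists x, x \in l /\ P x) ->
  exists x, P x /\ forall y, y \in l -> P y -> R x y.
Proof.
move=> Rt Rtr; elim => [|a l IH] [x [Hx Px]]; first by [].
have Raa : R a a by case: (Rt a a).
case: (classic (exists x, x \in l /\ P x)) => [H|H].
  case: (IH H) => m [Pm Hm].
  case: (classic (P a)) => Pa.
    case: (Rt m a) => Rma.
      exists m; split => // y; rewrite inE => /orP [/eqP ->|Hy] Py //.
      exact: Hm.
    exists a; split => // y; rewrite inE => /orP [/eqP ->|Hy] Py //.
    exact: Rtr Rma (Hm _ Hy Py).
  exists m; split => // y; rewrite inE => /orP [/eqP ->|Hy] Py //.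
  exact: Hm.
have Pa : P a.
  move: Hx; rewrite inE => /orP [/eqP <-|Hx] //.
  by exfalso; apply: H; exists x.
exists a; split => // y; rewrite inE => /orP [/eqP ->|Hy] Py //.
by exfalso; apply: H; exists y.
Qed.

End Aux.

Lemma inV_run (Q Sigma : finType) (q0 : Q) (delta : Q -> Sigma -> Q -> bool)
  (w : nat -> Sigma) i q :
  inV q0 delta w i q -> exists p, run_prefix q0 delta w i p /\ nth q0 p i = q.
Proof.
elim: i q => [|i IH] q /=.
  move=> /eqP ->; exists [:: q0]; split => //; split => //.
move=> /existsP [q' /andP [Hq' Hd]].
case: (IH _ Hq') => p [[Hs H0 Hj] Hn].
exists (rcons p q); split; last by rewrite nth_rcons Hs ltnn eqxx.
split; first by rewrite size_rcons Hs.
  by rewrite nth_rcons Hs.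
move=> j Hj'; rewrite !nth_rcons Hs.
case: (ltngtP j i) => H.
- by rewrite (ltn_trans H (ltnSn i)) ltnS H; apply: Hj.
- by move: Hj'; rewrite ltnS leqNgt H.
- by subst j; rewrite ltnSn ltnn eqxx Hn.
Qed.

Theorem mainTheorem1 (Q Sigma : finType) (q0 : Q)
  (delta alpha : Q -> Sigma -> Q -> bool) (Qd : {set Q})
  (Ord : Q -> option nat) (w : nat -> Sigma) :
  is_LDBA q0 delta alpha Qd ->
  is_ordering Qd Ord ->
  forall i : nat,
    (* totality: either v ⊏_i v' or v' ⊏_i v *)
    (forall v v', inVd q0 delta Qd w i v -> inVd q0 delta Qd w i v' -> v <> v' ->
       dag_lt q0 delta Ord w i v v' \/ dag_lt q0 delta Ord w i v' v) /\
    (* asymmetry *)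
    (forall v v', inVd q0 delta Qd w i v -> inVd q0 delta Qd w i v' -> v <> v' ->
       ~ (dag_lt q0 delta Ord w i v v' /\ dag_lt q0 delta Ord w i v' v)) /\
    (* transitivity *)
    (forall v v' v'', inVd q0 delta Qd w i v -> inVd q0 delta Qd w i v' ->
       inVd q0 delta Qd w i v'' -> v <> v' -> v' <> v'' -> v <> v'' ->
       dag_lt q0 delta Ord w i v v' -> dag_lt q0 delta Ord w i v' v'' ->
       dag_lt q0 delta Ord w i v v'').
Proof.
move=> _ [_ _ Hinj] i.
pose R := fun p p' => prefix_le q0 Ord i p p'.
have Rt : forall x y, R x y \/ R y x.
  move=> x y; exact: (lexle_total i (fun k => Ord (nth q0 x k)) (fun k => Ord (nth q0 y k))).
have Rtr : forall x y z, R x y -> R y z -> R x z.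
  move=> x y z; exact: lexle_trans.
split; [|split].
- move=> v v' /andP [_ Hv] /andP [_ Hv'] _.
  pose l := map val (enum {:i.+1.-tuple Q}).
  have inl : forall p, run_prefix q0 delta w i p -> p \in l.
    move=> p [Hs _ _]; have Hs' : size p == i.+1 by rewrite Hs.
    have -> : p = val (Tuple Hs') by [].
    by apply: map_f; rewrite mem_enum.
  pose P := fun p => run_prefix q0 delta w i p /\ (nth q0 p i = v \/ nth q0 p i = v').
  case: (@inV_run _ _ _ _ _ _ _ Hv) => p [Hp Hpn].
  case: (@list_min _ P R Rt Rtr l).
    by exists p; split; [apply: inl | split; auto].
  move=> m [[Hm [Em|Em]] Hmin].
  + left; exists m; split => // p' Hp' Hp'n; apply: Hmin; first exact: inl.
    by split; auto.
  + right; exists m; split => // p' Hp' Hp'n; apply: Hmin; first exact: inl.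
    by split; auto.
- move=> v v' /andP [Qv _] /andP [Qv' _] Hne [[p [Hp Hpn Hpm]] [q [Hq Hqn Hqm]]].
  apply: Hne; apply: Hinj => //.
  have := @lexle_antisym _ _ _ (Hpm q Hq Hqn) (Hqm p Hp Hpn) i (leqnn i).
  by rewrite Hpn Hqn.
- move=> v v' v'' _ _ _ _ _ _ [p [Hp Hpn Hpm]] [q [Hq Hqn Hqm]].
  exists p; split => // r Hr Hrn.
  exact: Rtr (Hpm q Hq Hqn) (Hqm r Hr Hrn).
Qed.
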